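(* Let $\mathbf A=[\mathbf a_1\ \cdots\ \mathbf a_n]\in\mathbb R^{m\times n}$, let $\mathbf x^0\in\mathbb R^n$ and $\mathcal S:=\mathrm{supp}(\mathbf x^0)$. Suppose $\mathbf A_{\mathcal S}^\top\mathbf A_{\mathcal S}$ is invertible and $$\|(\mathbf A_{\mathcal S}^\top\mathbf A_{\mathcal S})^{-1}\|_2\le 2,\qquad \max_{i\in\mathcal S^c}\|\mathbf A_{\mathcal S}^\top\mathbf a_i\|_2\le 1,$$ and there exists $\mathbf y\in\mathbb R^m$ such that $\mathbf v=\mathbf A^\top\mathbf y$ satisfies $$\|\mathbf v_{\mathcal S}-\mathrm{sign}(\mathbf x^0_{\mathcal S})\|_2\le 1/4,\qquad \|\mathbf v_{\mathcal S^c}\|_\infty\le 1/4.$$ Then for every $\alpha>0$ with $\alpha\ge 8\|\mathbf x^0\|_2$, $\mathbf x^0$ is the unique solution of problem (P2) with $\mathbf b=\mathbf A\mathbf x^0$.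
   Context: Problem (P2) is $\min_{\mathbf x}\{\|\mathbf x\|_1+\frac{1}{2\alpha}\|\mathbf x\|_2^2:\ \mathbf A\mathbf x=\mathbf b\}$. $\mathbf A_{\mathcal S}$ is the submatrix of columns of $\mathbf A$ indexed by $\mathcal S$; $\mathbf v_{\mathcal S}$ is the restriction of $\mathbf v$ to $\mathcal S$; $\mathrm{sign}$ acts componentwise; $\|\cdot\|_2$ on matrices is the spectral norm. *)

(* Defs.v *)
From HB Require Import structures.
From mathcomp Require Import all_boot all_order all_algebra.
Set Implicit Arguments. Unset Strict Implicit. Unset Printing Implicit Defensive.
Import Order.TTheory GRing.Theory Num.Theory.
Local Open Scope ring_scope.

Section Defs.
Variable R : rcfType.

Definition norm2 k (v : 'cV[R]_k) : R := Num.sqrt (\sum_i (v i 0) ^+ 2).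
Definition norm1 k (v : 'cV[R]_k) : R := \sum_i `|v i 0|.
Definition norminf k (v : 'cV[R]_k) : R := \big[Num.max/0]_i `|v i 0|.

Definition specnorm_le p q (M : 'M[R]_(p, q)) (c : R) : Prop :=
  forall x : 'cV[R]_q, norm2 (M *m x) <= c * norm2 x.

Definition supp n (x : 'cV[R]_n) : {set 'I_n} := [set i | x i 0 != 0].

Definition colS m n (A : 'M[R]_(m, n)) (S : {set 'I_n}) : 'M[R]_(m, #|S|) :=
  \matrix_(i, j) A i (enum_val j).

Definition restr n (v : 'cV[R]_n) (S : {set 'I_n}) : 'cV[R]_#|S| :=
  \col_j v (enum_val j) 0.

Definition sgnv k (v : 'cV[R]_k) : 'cV[R]_k := \col_j Num.sg (v j 0).

Definition P2obj (alpha : R) n (x : 'cV[R]_n) : R :=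
  norm1 x + (2 * alpha)^-1 * norm2 x ^+ 2.

Definition P2_solution m n (A : 'M[R]_(m, n)) (b : 'cV[R]_m) (alpha : R)
  (x : 'cV[R]_n) : Prop :=
  A *m x = b /\ forall z, A *m z = b -> P2obj alpha x <= P2obj alpha z.

Definition P2_unique_solution m n (A : 'M[R]_(m, n)) (b : 'cV[R]_m) (alpha : R)
  (x : 'cV[R]_n) : Prop :=
  P2_solution A b alpha x /\ forall z, P2_solution A b alpha z -> z = x.

End Defs.

(* Main.v *)
Require Import Defs.
From HB Require Import structures.
From mathcomp Require Import all_boot all_order all_algebra.
From mathcomp Require Import ring lra.
Import Order.TTheory GRing.Theory Num.Theory.
Set Implicit Arguments. Unset Strict Implicit. Unset Printing Implicit Defensive.
Local Open Scope ring_scope.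

Section Aux.
Variable R : rcfType.

Lemma cs_sum k (a b : 'I_k -> R) :
  (\sum_i a i * b i) ^+ 2 <= (\sum_i a i ^+ 2) * (\sum_i b i ^+ 2).
Proof.
have H : 0 <= \sum_i \sum_j (a i * b j - a j * b i) ^+ 2.
  by apply: sumr_ge0 => i _; apply: sumr_ge0 => j _; apply: sqr_ge0.
have E : \sum_i \sum_j (a i * b j - a j * b i) ^+ 2 =
   2 * ((\sum_i a i ^+ 2) * (\sum_i b i ^+ 2) - (\sum_i a i * b i) ^+ 2).
  transitivity (\sum_i \sum_j (a i ^+2 * b j ^+2 + b i ^+2 * a j ^+2
                 - 2 * ((a i * b i) * (a j * b j)))).
    by apply: eq_bigr => i _; apply: eq_bigr => j _; ring.
  under eq_bigr => i _ do rewrite sumrB big_split /= -!mulr_sumr.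
  rewrite sumrB big_split /= -!mulr_suml.
  rewrite -mulr_sumr -mulr_suml.
  ring.
move: H; rewrite E; nra.
Qed.

Definition dot k (u v : 'cV[R]_k) := \sum_i u i 0 * v i 0.

Lemma norm2_ge0 k (v : 'cV[R]_k) : 0 <= norm2 v.
Proof. exact: sqrtr_ge0. Qed.

Lemma sumsq_ge0 k (v : 'cV[R]_k) : 0 <= \sum_i v i 0 ^+ 2.
Proof. by apply: sumr_ge0 => i _; apply: sqr_ge0. Qed.

Lemma norm2_sq k (v : 'cV[R]_k) : norm2 v ^+ 2 = \sum_i v i 0 ^+ 2.
Proof. by rewrite /norm2 sqr_sqrtr // sumsq_ge0. Qed.

Lemma dot_le k (u v : 'cV[R]_k) : `|dot u v| <= norm2 u * norm2 v.
Proof.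
rewrite -sqrtr_sqr /norm2 -sqrtrM ?sumsq_ge0 //.
by apply: ler_wsqrtr; apply: cs_sum.
Qed.

Lemma norm2D k (u v : 'cV[R]_k) : norm2 (u + v) <= norm2 u + norm2 v.
Proof.
have h : norm2 (u + v) ^+ 2 <= (norm2 u + norm2 v) ^+ 2.
  have e : norm2 (u + v) ^+ 2 = norm2 u ^+ 2 + 2 * dot u v + norm2 v ^+ 2.
    rewrite !norm2_sq /dot mulr_sumr -!big_split /=.
    by apply: eq_bigr => i _; rewrite mxE; ring.
  rewrite e; have := dot_le u v; have := ler_norm (dot u v). nra.
rewrite -(@ler_pXn2r _ 2) // ?nnegrE ?addr_ge0 ?norm2_ge0 //.
Qed.

Lemma norm2N k (u : 'cV[R]_k) : norm2 (- u) = norm2 u.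
Proof. by rewrite /norm2; congr Num.sqrt; apply: eq_bigr => i _; rewrite mxE sqrrN. Qed.

Lemma norm2Z k c (u : 'cV[R]_k) : norm2 (c *: u) = `|c| * norm2 u.
Proof.
rewrite /norm2 -sqrtr_sqr -sqrtrM ?sqr_ge0 //; congr Num.sqrt.
by rewrite mulr_sumr; apply: eq_bigr => i _; rewrite mxE exprMn.
Qed.

Lemma le_bigmaxr k (F : 'I_k -> R) j : F j <= \big[Num.max/0]_i F i.
Proof.
have : j \in index_enum 'I_k by rewrite mem_index_enum.
rewrite /index_enum; elim: (Finite.enum _) => [//|a s IH].
rewrite big_cons inE le_max; case/orP => [/eqP->|/IH->]; first by rewrite lexx.
by rewrite orbT.
Qed.


Lemma cert m n (A : 'M[R]_(m,n)) (x0 : 'cV[R]_n) alpha (y : 'cV[R]_m) :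
  0 < alpha ->
  (forall i, x0 i 0 != 0 ->
     (A^T *m y) i 0 = Num.sg (x0 i 0) + 2 * (2 * alpha)^-1 * x0 i 0) ->
  (forall i, x0 i 0 = 0 -> `|(A^T *m y) i 0| <= 1) ->
  P2_unique_solution A (A *m x0) alpha x0.
Proof.
move=> apos hS hSc.
set c := (2 * alpha)^-1.
have cpos : 0 < c by rewrite invr_gt0 mulr_gt0.
set w := A^T *m y.
have key : forall z, A *m z = A *m x0 ->
    P2obj alpha x0 + c * \sum_i (z i 0 - x0 i 0) ^+ 2 <= P2obj alpha z.
  move=> z hz.
  have orth : \sum_i w i 0 * (z i 0 - x0 i 0) = 0.
    have h0 : A *m (z - x0) = 0 by rewrite mulmxBr hz subrr.
    transitivity (\sum_r y r 0 * (A *m (z - x0)) r 0); last first.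
      by rewrite h0; apply: big1 => r _; rewrite mxE mulr0.
    under eq_bigr => i _ do rewrite mxE mulr_suml.
    rewrite exchange_big /=; apply: eq_bigr => r _; rewrite mxE mulr_sumr.
    by apply: eq_bigr => i _; rewrite !mxE; ring.
  have hp : forall i, `|x0 i 0| + c * x0 i 0 ^+ 2 + c * (z i 0 - x0 i 0) ^+ 2
             + w i 0 * (z i 0 - x0 i 0) <= `|z i 0| + c * z i 0 ^+ 2.
    move=> i; have [e|ne] := eqVneq (x0 i 0) 0.
      have h1 := hSc i e; rewrite e normr0 subr0.
      have := ler_norm (w i 0 * z i 0); rewrite normrM.
      have := ler_wpM2r (normr_ge0 (z i 0)) h1; rewrite mul1r.
      have -> : c * 0 ^+ 2 = 0 by rewrite expr0n mulr0.
      lra.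
    rewrite (hS i ne).
    have hs : Num.sg (x0 i 0) * z i 0 <= `|z i 0|.
      by rewrite (le_trans (ler_norm _)) // normrM normr_sg ne mul1r.
    rewrite -/c (normrEsg (x0 i 0)); lra.
  have : \sum_i (`|x0 i 0| + c * x0 i 0 ^+ 2 + c * (z i 0 - x0 i 0) ^+ 2
             + w i 0 * (z i 0 - x0 i 0)) <= \sum_i (`|z i 0| + c * z i 0 ^+ 2).
    by apply: ler_sum => i _; apply: hp.
  rewrite !big_split /= -!mulr_sumr orth.
  rewrite /P2obj /norm1 !norm2_sq -/c; lra.
split.
  split=> // z hz; have := key z hz.
  move=> h2; apply: le_trans h2; rewrite lerDl mulr_ge0 ?(ltW cpos) //.
  by apply: sumr_ge0 => i _; apply: sqr_ge0.
move=> z [hz hmin].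
have := key z hz; have := hmin x0 erefl => h1 h2.
have h3 : \sum_i (z i 0 - x0 i 0) ^+ 2 = 0.
  apply/eqP; rewrite eq_le sumr_ge0 ?andbT; last by move=> i _; apply: sqr_ge0.
  have : c * \sum_i (z i 0 - x0 i 0) ^+ 2 <= 0 by lra.
  by rewrite pmulr_rle0.
apply/matrixP => i j; rewrite (ord1 j).
have := psumr_eq0P (fun i _ => sqr_ge0 (z i 0 - x0 i 0)) h3 (i := i) isT.
by move/eqP; rewrite sqrf_eq0 subr_eq0 => /eqP.
Qed.


Lemma restr_le n (x0 : 'cV[R]_n) (S : {set 'I_n}) : norm2 (restr x0 S) <= norm2 x0.
Proof.
apply: ler_wsqrtr.
have -> : \sum_j (restr x0 S) j 0 ^+ 2 = \sum_(i in S) x0 i 0 ^+ 2.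
  by rewrite [RHS]big_enum_val; apply: eq_bigr => j _; rewrite mxE.
rewrite big_mkcond /=; apply: ler_sum => i _.
by case: ifP => // _; apply: sqr_ge0.
Qed.

End Aux.

Theorem mainTheorem7 (R : rcfType) (m n : nat) (A : 'M[R]_(m, n)) (x0 : 'cV[R]_n) :
  let S := supp x0 in
  let AS := colS A S in
  (AS^T *m AS) \in unitmx ->
  specnorm_le (invmx (AS^T *m AS)) 2 ->
  (forall i : 'I_n, i \notin S -> norm2 (AS^T *m col i A) <= 1) ->
  (exists y : 'cV[R]_m,
      let v := A^T *m y in
      norm2 (restr v S - sgnv (restr x0 S)) <= 4^-1 /\
      norminf (restr v (~: S)) <= 4^-1) ->
  forall alpha : R, 0 < alpha -> 8 * norm2 x0 <= alpha ->
  P2_unique_solution A (A *m x0) alpha x0.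
Proof.
move=> S AS hU hspec hcol [y [hv1 hv2]] alpha apos halpha.
set v := A^T *m y in hv1 hv2.
set M := AS^T *m AS in hU hspec.
set c := (2 * alpha)^-1.
set xS := restr x0 S.
set d := sgnv xS + (2 * c) *: xS - restr v S.
set u := invmx M *m d.
have hA : A^T *m (y + AS *m u) = v + A^T *m AS *m u by rewrite mulmxDr mulmxA.
have hSi : forall i, (i \in S) = (x0 i 0 != 0) by move=> i; rewrite /S /supp inE.
apply: (@cert R m n A x0 alpha (y + AS *m u) apos).
  move=> i ne; rewrite hA.
  have hi : i \in S by rewrite hSi.
  set j := enum_rank_in hi i.
  have ej : enum_val j = i by rewrite /j enum_rankK_in.
  have e1 : (A^T *m AS *m u) i 0 = (M *m u) j 0.
    rewrite !mxE; apply: eq_bigr => k _; congr (_ * _).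
    rewrite !mxE; apply: eq_bigr => r _; rewrite !mxE ej //.
  have e2 : M *m u = d by rewrite /u mulmxA mulmxV // mul1mx.
  rewrite mxE e1 e2 /d !mxE ej /=.
  by rewrite -/c; ring.
move=> i e.
have hi : i \notin S by rewrite hSi e eqxx.
rewrite hA mxE.
have hvi : `|v i 0| <= 4^-1.
  have hi' : i \in ~: S by rewrite in_setC.
  apply: le_trans hv2.
  have := le_bigmaxr (fun j => `|restr v (~: S) j 0|) (enum_rank_in hi' i).
  by rewrite /= mxE enum_rankK_in.
have e1 : (A^T *m AS *m u) i 0 = dot (AS^T *m col i A) u.
  rewrite /dot mxE; apply: eq_bigr => k _; congr (_ * _).
  rewrite !mxE; apply: eq_bigr => r _; rewrite !mxE mulrC //.
have hd : norm2 d <= 4^-1 + 8^-1.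
  have -> : d = - (restr v S - sgnv xS) + (2 * c) *: xS.
    by apply/matrixP => a b; rewrite !mxE; ring.
  apply: le_trans (norm2D _ _) _; rewrite norm2N norm2Z.
  apply: lerD => //.
  have -> : `|2 * c| = alpha^-1.
    rewrite /c invfM mulrA divff ?pnatr_eq0 // mul1r ger0_norm // invr_ge0 ltW //.
  rewrite mulrC ler_pdivrMr //.
  have := restr_le x0 S; rewrite -/xS => h; lra.
have hu : norm2 u <= 2 * norm2 d by apply: hspec.
have hdot := dot_le (AS^T *m col i A) u.
have hc := hcol i hi.
rewrite e1.
apply: le_trans (ler_normD _ _) _.
have := norm2_ge0 u; have := norm2_ge0 (AS^T *m col i A).
nra.
Qed.
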